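(* Let $W,V$ be subspaces of $\mathbb{R}^n$ with $\mathbb{R}^n=W\oplus V^\perp$. Let $\mu\in\mathcal{P}_2(W)$ and $\nu\in\mathcal{P}_2(V)$ be Bessel probability measures with bounds $B_\mu>0$ and $B_\nu>0$ respectively, and let $\gamma\in\Gamma(\mu,\nu)$. Then the following are equivalent: (1) for all $\mathbf{f}\in W$, $\mathbf{f}=\int_{W\times V}\mathbf{x}\langle\mathbf{y},\mathbf{f}\rangle\,d\gamma(\mathbf{x},\mathbf{y})$; (2) for all $\mathbf{f}\in\mathbb{R}^n$, $\boldsymbol{\pi}_{WV^\perp}\mathbf{f}=\int_{W\times V}\mathbf{x}\langle\mathbf{y},\mathbf{f}\rangle\,d\gamma(\mathbf{x},\mathbf{y})$; (3) for all $\mathbf{f}\in\mathbb{R}^n$, $\boldsymbol{\pi}_{VW^\perp}\mathbf{f}=\int_{W\times V}\langle\mathbf{x},\mathbf{f}\rangle\mathbf{y}\,d\gamma(\mathbf{x},\mathbf{y})$; (4) for all $\mathbf{f},\mathbf{g}\in\mathbb{R}^n$, $\langle\boldsymbol{\pi}_{WV^\perp}\mathbf{f},\mathbf{g}\rangle=\int_{W\times V}\langle\mathbf{x},\mathbf{g}\rangle\langle\mathbf{y},\mathbf{f}\rangle\,d\gamma(\mathbf{x},\mathbf{y})$; (5) for all $\mathbf{f},\mathbf{g}\in\mathbb{R}^n$, $\langle\boldsymbol{\pi}_{VW^\perp}\mathbf{f},\mathbf{g}\rangle=\int_{W\times V}\langle\mathbf{x},\mathbf{f}\rangle\langle\mathbf{y},\mathbf{g}\rangle\,d\gamma(\mathbf{x},\mathbf{y})$.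 If any of these conditions holds, then $\mu$ and $\nu$ are probabilistic frames for $W$ and $V$ with lower bounds $\frac1{B_\nu}$ and $\frac1{B_\mu}$, respectively. Furthermore, in that case $\mu$ and $(\mathbf{P}_W)_\#\nu$ are dual probabilistic frames for $W$, and $(\mathbf{P}_V)_\#\mu$ and $\nu$ are dual probabilistic frames for $V$.
   Context: $\mathcal{P}_2(W)$ is the set of Borel probability measures on $W$ (viewed as measures on $\mathbb{R}^n$ concentrated on $W$) with finite second moment $M_2(\mu)=\int\|\mathbf{x}\|^2d\mu(\mathbf{x})$. $\Gamma(\mu,\nu)$ is the set of couplings: Borel probability measures on $W\times V$ with first marginal $\mu$ and second marginal $\nu$. $\mu\in\mathcal{P}_2(W)$ is a Bessel probability measure for $W$ with bound $B$ if $\int_W|\langle\mathbf{x},\mathbf{y}\rangle|^2d\mu(\mathbf{y})\le B\|\mathbf{x}\|^2$ for all $\mathbf{x}\in W$; it is a probabilistic frame for $W$ with bounds $0<A\le B$ if moreover $A\|\mathbf{x}\|^2\le\int_W|\langle\mathbf{x},\mathbf{y}\rangle|^2d\mu(\mathbf{y})$ for all $\mathbf{x}\in W$. $\mathbf{P}_W$ is the orthogonal projection onto $W$; $\boldsymbol{\pi}_{WV^\perp}$ is the oblique projection onto $W$ along $V^\perp$, and $\boldsymbol{\pi}_{VW^\perp}$ the oblique projection onto $V$ along $W^\perp$ (note $\mathbb{R}^n=V\oplus W^\perp$ too). For a pushforward, $f_\#\mu(E)=\mu(f^{-1}(E))$. Two probability measures $\mu,\eta$ on $W$ are dual probabilistic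 frames for $W$ if $\mu$ is a probabilistic frame for $W$ and there is a coupling $\gamma\in\Gamma(\mu,\eta)$ with $\int\mathbf{x}\mathbf{y}^td\gamma(\mathbf{x},\mathbf{y})=\mathbf{P}_W$. *)

(* Defs.v *)
From HB Require Import structures.
From mathcomp Require Import all_boot all_order all_algebra.
From mathcomp Require Import all_classical all_reals all_analysis.
Set Implicit Arguments. Unset Strict Implicit. Unset Printing Implicit Defensive.
Import Order.TTheory GRing.Theory Num.Theory.
Local Open Scope classical_set_scope.
Local Open Scope ring_scope.

(* The ambient space R^n, represented by row vectors 'rV[R]_n.  Subspaces of
   R^n are represented (as in mxalgebra) by the row space of a square matrix
   W : 'M[R]_n, and membership is (x <= W)%MS. *)
Definition vec (R : realType) (n : nat) : Type := 'rV[R]_n.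

HB.instance Definition _ (R : realType) n := Choice.copy (vec R n) ('rV[R]_n).
HB.instance Definition _ (R : realType) n := isPointed.Build (vec R n) (0 : 'rV[R]_n).

Definition vec_display : measure_display -> measure_display.
Proof. exact. Qed.

(* The Borel sigma-algebra of R^n = the sigma-algebra generated by the
   coordinate functions. *)
Section vec_measurable.
Variables (R : realType) (n : nat).
Let coor : 'I_n -> vec R n -> R := fun i x => x ord0 i.
Let vec_set0 : g_sigma_preimage coor set0.
Proof. exact: sigma_algebra0. Qed.
Let vec_setC A : g_sigma_preimage coor A -> g_sigma_preimage coor (~` A).
Proof. exact: sigma_algebraC. Qed.
Let vec_bigcup (F : _^nat) : (forall i, g_sigma_preimage coor (F i)) ->
  g_sigma_preimage coor (\bigcup_i (F i)).
Proof. exact: sigma_algebra_bigcup. Qed.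
HB.instance Definition _ := @isMeasurable.Build (vec_display default_measure_display)
  (vec R n) (g_sigma_preimage coor) vec_set0 vec_setC vec_bigcup.
End vec_measurable.

Definition dotv (R : realType) n (x y : 'rV[R]_n) : R := (x *m y^T) ord0 ord0.
Definition sqnorm (R : realType) n (x : 'rV[R]_n) : R := dotv x x.

Definition orthmx (R : realType) n (W : 'M[R]_n) : 'M[R]_n := kermx W^T.

(* Orthogonal projection P_W, and oblique projection pi_{W V^perp}
   onto W along V^perp (acting on row vectors by right multiplication). *)
Definition orth_proj (R : realType) n (W : 'M[R]_n) : 'M[R]_n :=
  proj_mx W (orthmx W).
Definition obl_proj (R : realType) n (W V : 'M[R]_n) : 'M[R]_n :=
  proj_mx W (orthmx V).

Section frames.
Variables (R : realType) (n : nat).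
Local Notation V := (vec R n).
Local Notation dsp := (vec_display default_measure_display).

Definition concentrated_on (mu : set V -> \bar R) (W : 'M[R]_n) : Prop :=
  exists2 A : set V, measurable A /\ A `<=` [set x | (x <= W)%MS] & mu A = 1%E.

Definition in_P2 (mu : probability V R) (W : 'M[R]_n) : Prop :=
  concentrated_on mu W /\
  (\int[mu]_(x in setT) (sqnorm x)%:E < +oo)%E.

Definition bessel (mu : probability V R) (W : 'M[R]_n) (B : R) : Prop :=
  in_P2 mu W /\
  forall x : 'rV[R]_n, (x <= W)%MS ->
    (\int[mu]_(y in setT) ((dotv x y) ^+ 2)%:E <= (B * sqnorm x)%:E)%E.

(* The side condition A <= B of
   the paper is omitted: it follows from the two inequalities whenever W <> 0,
   and would make the statement false in the degenerate case W = 0. *)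
Definition prob_frame (mu : probability V R) (W : 'M[R]_n) (A B : R) : Prop :=
  0 < A /\ bessel mu W B /\
  forall x : 'rV[R]_n, (x <= W)%MS ->
    ((A * sqnorm x)%:E <= \int[mu]_(y in setT) ((dotv x y) ^+ 2)%:E)%E.

Definition coupling (gamma : probability (V * V)%type R)
    (mu eta : set V -> \bar R) : Prop :=
  (forall A : set V, measurable A -> gamma (fst @^-1` A) = mu A) /\
  (forall A : set V, measurable A -> gamma (snd @^-1` A) = eta A).

Definition dual_frames (mu eta : probability V R)
    (W : 'M[R]_n) : Prop :=
  (exists A B, prob_frame mu W A B) /\ concentrated_on eta W /\
  exists gamma : probability (V * V)%type R,
    coupling gamma mu eta /\
    forall i j : 'I_n,
      (\int[gamma]_(p in setT) ((p.1 : 'rV[R]_n) ord0 i * (p.2 : 'rV[R]_n) ord0 j)%:E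
       = (orth_proj W i j)%:E)%E.

Definition is_pushforward (eta : set V -> \bar R) (mu : set V -> \bar R)
    (f : V -> V) : Prop :=
  forall A : set V, measurable A -> eta A = mu (f @^-1` A).

End frames.

(* Main.v *)
Require Import Defs.
From HB Require Import structures.
From mathcomp Require Import all_boot all_order all_algebra.
From mathcomp Require Import all_classical all_reals all_analysis.
From mathcomp Require Import measurable_realfun.
From mathcomp Require Import zify ring lra.
Import Order.TTheory GRing.Theory Num.Theory.
Local Open Scope classical_set_scope.
Local Open Scope ring_scope.


Section LA.
Context {R : realType} {n : nat}.
Implicit Types (x y f g : 'rV[R]_n) (A B U V W : 'M[R]_n).

Lemma dotvE x y : dotv x y = \sum_k x ord0 k * y ord0 k.
Proof. by rewrite /dotv mxE; apply: eq_bigr => k _; rewrite mxE. Qed.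

Lemma dotvC x y : dotv x y = dotv y x.
Proof. by rewrite !dotvE; apply: eq_bigr => k _; rewrite mulrC. Qed.

Lemma dotvDl x y f : dotv (x + y) f = dotv x f + dotv y f.
Proof. by rewrite !dotvE -big_split; apply: eq_bigr => k _; rewrite mxE mulrDl. Qed.

Lemma dotvDr x y f : dotv f (x + y) = dotv f x + dotv f y.
Proof. by rewrite dotvC dotvDl !(dotvC f). Qed.

Lemma dotvNl x y : dotv (- x) y = - dotv x y.
Proof. by rewrite !dotvE -sumrN; apply: eq_bigr => k _; rewrite mxE mulNr. Qed.

Lemma dotvBl x y f : dotv (x - y) f = dotv x f - dotv y f.
Proof. by rewrite dotvDl dotvNl. Qed.

Lemma dotvBr x y f : dotv f (x - y) = dotv f x - dotv f y.
Proof. by rewrite dotvC dotvBl !(dotvC f). Qed.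

Lemma dotvZl a x y : dotv (a *: x) y = a * dotv x y.
Proof. by rewrite !dotvE mulr_sumr; apply: eq_bigr => k _; rewrite mxE mulrA. Qed.

Lemma dotv_ge0 x : 0 <= dotv x x.
Proof. by rewrite dotvE sumr_ge0 // => k _; rewrite -expr2 sqr_ge0. Qed.

Lemma dotv_eq0 x : dotv x x = 0 -> x = 0.
Proof.
rewrite dotvE => /eqP; rewrite psumr_eq0 => [/allP H|k _]; last by rewrite -expr2 sqr_ge0.
apply/rowP => k; rewrite mxE; have /H := mem_index_enum k.
by rewrite /= mulf_eq0 orbb => /eqP.
Qed.

Lemma dotv_orth {x y A} : (x <= A)%MS -> (y <= orthmx A)%MS -> dotv x y = 0.
Proof.
move=> /submxP[D ->] /sub_kermxP yA.
by rewrite /dotv -mulmxA -[A *m y^T]trmxK trmx_mul trmxK yA trmx0 mulmx0 mxE.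
Qed.

Lemma dotv_mulmx x y A : dotv (x *m A) y = dotv x (y *m A^T).
Proof. by rewrite /dotv trmx_mul trmxK mulmxA. Qed.


Lemma capEq0 U V : (U :&: V == (0 : 'M[R]_n))%MS -> (U :&: V)%MS = 0.
Proof. by case/andP => H _; apply/eqP; rewrite -submx0. Qed.

Lemma fullE U V : (U + V == (1%:M : 'M[R]_n))%MS -> (1%:M <= U + V)%MS.
Proof. by case/andP. Qed.

Lemma orth_cap U : (U :&: orthmx U)%MS = 0.
Proof.
apply/eqP/rowV0P => v; rewrite sub_capmx => /andP[vU vO].
by apply: dotv_eq0; apply: dotv_orth vU vO.
Qed.

Lemma rank_orth U : \rank (orthmx U) = (n - \rank U)%N.
Proof. by rewrite /orthmx mxrank_ker mxrank_tr. Qed.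

Lemma full_of_rank (X : 'M[R]_n) : \rank X = n -> (1%:M <= X)%MS.
Proof.
move=> rX; have := mxrank_leqif_sup (submx1 X).
by rewrite rX mxrank1 => -[_]; rewrite eqxx => /esym.
Qed.

Lemma orth_full U : (1%:M <= U + orthmx U)%MS.
Proof.
apply: full_of_rank; rewrite mxrank_disjoint_sum ?orth_cap // rank_orth.
by rewrite subnKC // rank_leq_col.
Qed.

Lemma swap_cap {W V} : (1%:M <= W + orthmx V)%MS -> (W :&: orthmx V)%MS = 0 ->
  (V :&: orthmx W)%MS = 0.
Proof.
move=> full cap; apply/eqP/rowV0P => v; rewrite sub_capmx => /andP[vV vW].
have /sub_addsmxP[[a b] /= vE] := submx_trans (submx1 v) full.
apply: dotv_eq0; rewrite {1}vE dotvDl.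
rewrite (dotv_orth (submxMl _ _) vW) add0r.
by rewrite dotvC (dotv_orth vV (submxMl _ _)).
Qed.

Lemma swap_full {W V} : (1%:M <= W + orthmx V)%MS -> (W :&: orthmx V)%MS = 0 ->
  (1%:M <= V + orthmx W)%MS.
Proof.
move=> full cap; apply: full_of_rank.
rewrite mxrank_disjoint_sum; last exact: swap_cap.
rewrite rank_orth.
have := mxrank_disjoint_sum cap.
rewrite rank_orth.
have -> : \rank (W + orthmx V)%MS = n.
  apply/eqP; rewrite eqn_leq rank_leq_col /=.
  by rewrite -{1}(mxrank1 R n) mxrankS.
move=> h; have hV := rank_leq_col V; have hW := rank_leq_col W.
move: h hV hW; move: (\rank V) (\rank W) => a b; lia.
Qed.

Lemma proj_compl U X m (x : 'M[R]_(m, n)) : (1%:M <= U + X)%MS ->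
  (x - x *m proj_mx U X <= X)%MS.
Proof. by move=> full; apply: proj_mx_compl_sub; apply: submx_trans (submx1 _) full. Qed.

Lemma proj_adj W V f g :
  (1%:M <= W + orthmx V)%MS -> (W :&: orthmx V)%MS = 0 ->
  dotv (f *m proj_mx W (orthmx V)) g = dotv f (g *m proj_mx V (orthmx W)).
Proof.
move=> full cap; have full' := swap_full full cap.
set P := proj_mx W _; set Q := proj_mx V _.
have e1 : dotv (f *m P) g = dotv (f *m P) (g *m Q).
  rewrite -{1}(subrK (g *m Q) g) dotvDr (dotv_orth (proj_mx_sub _ _ _)) ?add0r //.
  exact: proj_compl.
have e2 : dotv f (g *m Q) = dotv (f *m P) (g *m Q).
  rewrite -{1}(subrK (f *m P) f) dotvDl dotvC (dotv_orth (proj_mx_sub _ _ _)) ?add0r //.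
  exact: proj_compl.
by rewrite e1 e2.
Qed.


Lemma dotvZr a x y : dotv x (a *: y) = a * dotv x y.
Proof. by rewrite dotvC dotvZl dotvC. Qed.

Lemma sqnormE x : sqnorm x = dotv x x. Proof. by []. Qed.

Lemma dotv_CS x y : dotv x y ^+ 2 <= dotv x x * dotv y y.
Proof.
have [x0|xn0] := eqVneq (dotv x x) 0.
  by have -> := dotv_eq0 _ x0; rewrite /dotv !mul0mx !mxE expr2 !mul0r.
have sp : 0 < dotv x x by rewrite lt_def xn0 dotv_ge0.
set u := dotv x x *: y - dotv x y *: x.
have : 0 <= dotv u u by exact: dotv_ge0.
rewrite /u !dotvBl !dotvBr !dotvZl !dotvZr (dotvC y x).
set s := dotv x x; set c := dotv x y; set t := dotv y y => h.
have : 0 <= s * (s * t - c ^+ 2).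
  by move: h; congr (_ <= _); ring.
by rewrite pmulr_rge0 // subr_ge0.
Qed.

Lemma abs_mul_le (a b : R) : `|a * b| <= a ^+ 2 + b ^+ 2.
Proof.
rewrite ler_norml; apply/andP; split; nra.
Qed.

Lemma amgm (t a b : R) : 0 < t -> a * b <= t / 2 * a ^+ 2 + (2 * t)^-1 * b ^+ 2.
Proof.
move=> t0; rewrite -subr_ge0.
have : 0 <= (2 * t)^-1 * (t * a - b) ^+ 2.
  by apply: mulr_ge0; [rewrite invr_ge0 mulr_ge0 // ltW | exact: sqr_ge0].
congr (_ <= _); field; by rewrite gt_eqF.
Qed.


Lemma dotv_delta x (i : 'I_n) : dotv x (delta_mx 0 i) = x ord0 i.
Proof.
rewrite dotvE (bigD1 i) //= mxE !eqxx mulr1 big1 ?addr0 // => k ki.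
by rewrite mxE (negbTE ki) andbF mulr0.
Qed.

Lemma dotv_expand x a : dotv x a = \sum_i a ord0 i * dotv x (delta_mx 0 i).
Proof. by rewrite dotvE; apply: eq_bigr => i _; rewrite dotv_delta mulrC. Qed.

Lemma dotv_mul_expand x y a b : dotv x a * dotv y b =
  \sum_i \sum_k (a ord0 i * b ord0 k) * (dotv x (delta_mx 0 i) * dotv y (delta_mx 0 k)).
Proof.
rewrite (dotv_expand x a) (dotv_expand y b) mulr_suml; apply: eq_bigr => i _.
rewrite mulr_sumr; apply: eq_bigr => k _; ring.
Qed.

Lemma dotv_mx_expand (M : 'M[R]_n) a b : dotv (a *m M) b =
  \sum_i \sum_k (a ord0 i * b ord0 k) * M i k.
Proof.
rewrite dotvE exchange_big; apply: eq_bigr => k _; rewrite mxE mulr_suml.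
by apply: eq_bigr => i _; ring.
Qed.


Lemma dotv_rowE (A : 'M[R]_n) (i j : 'I_n) :
  dotv (delta_mx 0 i *m A) (delta_mx 0 j) = A i j.
Proof. by rewrite dotv_delta -rowE mxE. Qed.

Lemma mulmx_coord x (B : 'M[R]_n) (j : 'I_n) :
  (x *m B) ord0 j = dotv x (delta_mx 0 j *m B^T).
Proof.
rewrite dotvE mxE; apply: eq_bigr => k _.
by rewrite -rowE !mxE.
Qed.

Lemma vec_ext x y : (forall g, dotv x g = dotv y g) -> x = y.
Proof. by move=> h; apply/rowP => i; rewrite -!dotv_delta h. Qed.

Lemma mx_ext (A B : 'M[R]_n) : (forall f : 'rV[R]_n, f *m A = f *m B) -> A = B.
Proof. by move=> h; apply/row_matrixP => i; rewrite !rowE h. Qed.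

Lemma adj_tr (A B : 'M[R]_n) :
  (forall f g, dotv (f *m A) g = dotv f (g *m B)) -> A^T = B.
Proof.
move=> h; apply/matrixP => i j; rewrite mxE -dotv_rowE h dotvC.
by rewrite dotv_rowE.
Qed.

Lemma pyth (a b : 'rV[R]_n) : dotv a b = 0 -> sqnorm (a + b) = sqnorm a + sqnorm b.
Proof.
move=> ab; rewrite /sqnorm dotvDl !dotvDr (dotvC b a) ab.
by rewrite addr0 add0r.
Qed.

Lemma proj_norm_le U x : sqnorm (x *m proj_mx U (orthmx U)) <= sqnorm x.
Proof.
set y := x *m _.
have yU : (y <= U)%MS by exact: proj_mx_sub.
have zU : (x - y <= orthmx U)%MS by exact: proj_compl (orth_full U).
have -> : sqnorm x = sqnorm y + sqnorm (x - y).
  by rewrite -pyth ?(dotv_orth yU zU) // addrC subrK.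
by rewrite lerDl dotv_ge0.
Qed.


Lemma rowP' (u v : 'rV[R]_n) : (forall j, u ord0 j = v ord0 j) -> u = v.
Proof. by move=> h; apply/rowP. Qed.

End LA.


Section MS.
Context {R : realType} {n : nat}.
Local Notation V := (vec R n).

Lemma mcoor (i : 'I_n) : measurable_fun setT (fun x : V => (x : 'rV[R]_n) ord0 i).
Proof.
move=> _ Y mY; rewrite setTI; apply: sub_sigma_algebra => /=.
rewrite -bigcup_seq/=; exists i => /=; first by rewrite mem_index_enum.
by exists Y => //; rewrite setTI.
Qed.

Lemma mvecP d (T : measurableType d) (h : T -> V) :
  (forall i, measurable_fun setT (fun t => (h t : 'rV[R]_n) ord0 i)) ->
  measurable_fun setT h.
Proof.
move=> mh _ A mA; rewrite setTI.
have : g_sigma_preimage (fun i => (fun x : V => (x : 'rV[R]_n) ord0 i) \o h) `<=` measurable.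
  apply: smallest_sub; first exact: sigma_algebra_measurable.
  case: n => [|m] in h mh A mA *; first by rewrite big_ord0.
  rewrite -bigcup_mkord_ord; apply: bigcup_sub => i Ii.
  by move=> B [C mC <-]; exact: mh.
rewrite g_sigma_preimage_comp; apply.
by exists A => //; rewrite setTI.
Qed.

Lemma mdotv2 d (T : measurableType d) (h1 h2 : T -> V) :
  measurable_fun setT h1 -> measurable_fun setT h2 ->
  measurable_fun setT (fun t => dotv (h1 t) (h2 t)).
Proof.
move=> m1 m2; under eq_fun do rewrite dotvE.
apply: measurable_sum => k; apply: measurable_realfun.measurable_funM.
- exact: (measurableT_comp (mcoor k) m1).
- exact: (measurableT_comp (mcoor k) m2).
Qed.

Lemma mmulmx d (T : measurableType d) (h : T -> V) (A : 'M[R]_n) :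
  measurable_fun setT h -> measurable_fun setT (fun t => ((h t : 'rV[R]_n) *m A : V)).
Proof.
move=> mh; apply: mvecP => i.
under eq_fun do rewrite mxE.
apply: measurable_sum => k; apply: measurable_realfun.measurable_funM => //.
exact: (measurableT_comp (mcoor k) mh).
Qed.

Lemma msub (W : 'M[R]_n) : measurable [set x : V | (x <= W)%MS].
Proof.
pose g := fun x : V => dotv ((x : 'rV[R]_n) *m cokermx W) ((x : 'rV[R]_n) *m cokermx W).
have mg : measurable_fun setT g by apply: mdotv2; apply: mmulmx.
have -> : [set x : V | (x <= W)%MS] = setT `&` g @^-1` [set 0].
  apply/seteqP; split => x /=.
    by rewrite submxE => /eqP H; split => //; rewrite /g H /dotv mul0mx mxE.
  by move=> [_ /dotv_eq0 H]; rewrite submxE H.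
exact: mg.
Qed.

End MS.


Section AR.
Context {R : realType}.

Lemma lb_real (s B r q : R) : 0 < B -> q <= B * s ->
  s <= B / 2 * r + (2 * B)^-1 * q -> B^-1 * s <= r.
Proof.
move=> B0 qle h.
have B0' : B != 0 by rewrite gt_eqF.
have h1 : (2 * B)^-1 * q <= s / 2.
  have -> : s / 2 = (2 * B)^-1 * (B * s) by field.
  by rewrite ler_pM2l // invr_gt0 mulr_gt0.
have h2 : s <= B * r by lra.
have -> : r = B^-1 * (B * r) by field.
by rewrite ler_pM2l // invr_gt0.
Qed.

Lemma lb_arith (s B : R) (I1 I2 : \bar R) : 0 < B -> (0 <= I1)%E -> (0 <= I2)%E ->
  (I2 <= (B * s)%:E)%E ->
  (s%:E <= (B / 2)%:E * I1 + ((2 * B)^-1)%:E * I2)%E -> ((B^-1 * s)%:E <= I1)%E.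
Proof.
move=> B0; case: I1 => [r| |] //= r0; last by rewrite leey.
case: I2 => [q| |] //= q0 qle h.
rewrite -!EFinM -EFinD !lee_fin in h qle *.
exact: lb_real qle h.
Qed.

Lemma lb_arith2 (s B : R) (I1 I2 : \bar R) : 0 < B -> (0 <= I1)%E -> (0 <= I2)%E ->
  (I1 <= (B * s)%:E)%E ->
  (s%:E <= (B^-1 / 2)%:E * I1 + ((2 * B^-1)^-1)%:E * I2)%E -> ((B^-1 * s)%:E <= I2)%E.
Proof.
move=> B0 I10 I20 I1le h; apply: lb_arith I20 I10 I1le _ => //.
have B0' : B != 0 by rewrite gt_eqF.
rewrite addeC; move: h; congr (_ <= _ + _)%E; congr (_%:E * _)%E; field; exact: B0'.
Qed.

End AR.


Section INT.
Context {R : realType} {n : nat}.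
Local Notation V := (vec R n).
Context {mu nu : probability V R} {gamma : probability (V * V)%type R}.
Hypothesis cpl : coupling gamma mu nu.

Lemma int_fst (g : V -> R) : measurable_fun setT g -> (forall x, 0 <= g x) ->
  (\int[gamma]_(p in setT) (g p.1)%:E = \int[mu]_(x in setT) (g x)%:E)%E.
Proof.
move=> mg g0.
rewrite [RHS](eq_measure_integral (pushforward gamma fst)); last first.
  by move=> A mA _; rewrite /pushforward; exact/esym/(cpl.1 A mA).
rewrite ge0_integral_pushforward //.
- exact/measurable_EFinP.
- by move=> y _; rewrite lee_fin.
Qed.

Lemma int_snd (g : V -> R) : measurable_fun setT g -> (forall x, 0 <= g x) ->
  (\int[gamma]_(p in setT) (g p.2)%:E = \int[nu]_(x in setT) (g x)%:E)%E.
Proof.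
move=> mg g0.
rewrite [RHS](eq_measure_integral (pushforward gamma snd)); last first.
  by move=> A mA _; rewrite /pushforward; exact/esym/(cpl.2 A mA).
rewrite ge0_integral_pushforward //.
- exact/measurable_EFinP.
- by move=> y _; rewrite lee_fin.
Qed.


Lemma mfst_dot (a : 'rV[R]_n) : measurable_fun setT (fun p : V * V => dotv (p.1 : 'rV[R]_n) a).
Proof. exact: (@mdotv2 R n _ _ fst (fun=> a) measurable_fst (measurable_cst _)). Qed.

Lemma msnd_dot (a : 'rV[R]_n) : measurable_fun setT (fun p : V * V => dotv (p.2 : 'rV[R]_n) a).
Proof. exact: (@mdotv2 R n _ _ snd (fun=> a) measurable_snd (measurable_cst _)). Qed.

Lemma msqn : measurable_fun setT (fun x : V => sqnorm (x : 'rV[R]_n)).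
Proof. exact: (@mdotv2 R n _ V id id (@measurable_id _ V setT) (@measurable_id _ V setT)). Qed.

Hypothesis m2mu : (\int[mu]_(x in setT) (sqnorm (x : 'rV[R]_n))%:E < +oo)%E.
Hypothesis m2nu : (\int[nu]_(x in setT) (sqnorm (x : 'rV[R]_n))%:E < +oo)%E.

Lemma integ_sq1 : gamma.-integrable setT (fun p => (sqnorm (p.1 : 'rV[R]_n))%:E).
Proof.
apply/integrableP; split.
  by apply/measurable_EFinP; apply: (measurableT_comp msqn).
under eq_integral do rewrite gee0_abs ?lee_fin ?dotv_ge0 //.
by rewrite (int_fst _ msqn) // => x; exact: dotv_ge0.
Qed.

Lemma integ_sq2 : gamma.-integrable setT (fun p => (sqnorm (p.2 : 'rV[R]_n))%:E).
Proof.
apply/integrableP; split.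
  by apply/measurable_EFinP; apply: (measurableT_comp msqn).
under eq_integral do rewrite gee0_abs ?lee_fin ?dotv_ge0 //.
by rewrite (int_snd _ msqn) // => x; exact: dotv_ge0.
Qed.

Lemma integ_ab (a b : 'rV[R]_n) :
  gamma.-integrable setT (fun p => (dotv (p.1 : 'rV[R]_n) a * dotv (p.2 : 'rV[R]_n) b)%:E).
Proof.
apply: (le_integrable _ _ _ (integrableD _ (integrableZl _ (sqnorm a) integ_sq1)
                                         (integrableZl _ (sqnorm b) integ_sq2))) => //.
  apply/measurable_EFinP; apply: measurable_funM; [exact: mfst_dot | exact: msnd_dot].
move=> p _ /=; rewrite lee_fin.
apply: (le_trans (abs_mul_le _ _)).
rewrite ger0_norm ?addr_ge0 ?mulr_ge0 ?dotv_ge0 //.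
apply: lerD; rewrite mulrC; exact: dotv_CS.
Qed.


Lemma dsumEFin (F : 'I_n -> 'I_n -> R) :
  ((\sum_i \sum_k F i k)%:E = \sum_i \sum_k (F i k)%:E)%E.
Proof. by rewrite -sumEFin; apply: eq_bigr => i _; rewrite -sumEFin. Qed.

Definition Mx : 'M[R]_n := \matrix_(i, k) fine (\int[gamma]_(p in setT)
   (dotv (p.1 : 'rV[R]_n) (delta_mx 0 i) * dotv (p.2 : 'rV[R]_n) (delta_mx 0 k))%:E)%E.

Lemma int_ab (a b : 'rV[R]_n) :
  (\int[gamma]_(p in setT) (dotv (p.1 : 'rV[R]_n) a * dotv (p.2 : 'rV[R]_n) b)%:E)%E
  = (dotv (a *m Mx) b)%:E.
Proof.
under eq_integral do rewrite dotv_mul_expand dsumEFin.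
rewrite integral_sum //; last first.
  move=> i; apply: integrable_sum => // k _.
  under eq_fun do rewrite EFinM.
  exact: integrableZl (integ_ab _ _).
rewrite dotv_mx_expand dsumEFin; apply: eq_bigr => i _.
rewrite integral_sum //; last first.
  move=> k; under eq_fun do rewrite EFinM.
  exact: integrableZl (integ_ab _ _).
apply: eq_bigr => k _.
under eq_integral do rewrite EFinM.
rewrite integralZl //; last exact: integ_ab.
rewrite mxE !EFinM fineK //; exact: integrable_fin_num (integ_ab _ _).
Qed.


Lemma ae_eq_prob d (T : measurableType d) (P : probability T R) (S : set T)
    (f g : T -> \bar R) :
  measurable S -> P S = 1%E -> (forall x, S x -> f x = g x) -> ae_eq P setT f g.
Proof.
move=> mS PS fg; exists (~` S); split.
- exact: measurableC.
- by have h := probability_setC P mS; rewrite PS subee // in h.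
- by move=> x /= H Sx; apply: H => _; exact: fg.
Qed.

Lemma ae_snd (W : 'M[R]_n) (f g : V * V -> \bar R) : concentrated_on nu W ->
  (forall p : V * V, ((p.2 : 'rV[R]_n) <= W)%MS -> f p = g p) -> ae_eq gamma setT f g.
Proof.
move=> [A [mA AW] nuA] fg.
apply: (@ae_eq_prob _ _ gamma (snd @^-1` A)).
- by rewrite -[X in measurable X]setTI; exact: measurable_snd.
- by rewrite cpl.2.
- by move=> p Ap; apply: fg; exact: AW.
Qed.

Lemma ae_fst (W : 'M[R]_n) (f g : V * V -> \bar R) : concentrated_on mu W ->
  (forall p : V * V, ((p.1 : 'rV[R]_n) <= W)%MS -> f p = g p) -> ae_eq gamma setT f g.
Proof.
move=> [A [mA AW] muA] fg.
apply: (@ae_eq_prob _ _ gamma (fst @^-1` A)).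
- by rewrite -[X in measurable X]setTI; exact: measurable_fst.
- by rewrite cpl.1.
- by move=> p Ap; apply: fg; exact: AW.
Qed.

Lemma Mx_perp (Vm : 'M[R]_n) (a u : 'rV[R]_n) : concentrated_on nu Vm ->
  (u <= orthmx Vm)%MS -> dotv (a *m Mx) u = 0.
Proof.
move=> cV uV; apply/eqP; rewrite -(@eqe R) -int_ab.
rewrite (ae_eq_integral (cst 0%E)) ?integral0 //.
- apply/measurable_EFinP; apply: measurable_funM; [exact: mfst_dot | exact: msnd_dot].
- apply: (ae_snd _ _ _ cV) => p pV /=.
  by rewrite (dotv_orth pV uV) mulr0.
Qed.


Lemma mdotsq (a : 'rV[R]_n) : measurable_fun setT (fun y : V => dotv a (y : 'rV[R]_n) ^+ 2).
Proof.
apply: measurable_funX.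
exact: (@mdotv2 R n _ V (fun=> a) id (measurable_cst _) (@measurable_id _ V setT)).
Qed.

Lemma amgm_int (a b : 'rV[R]_n) (t : R) : 0 < t ->
  ((dotv (a *m Mx) b)%:E <=
    (t / 2)%:E * \int[mu]_(y in setT) (dotv a (y : 'rV[R]_n) ^+ 2)%:E +
    ((2 * t)^-1)%:E * \int[nu]_(y in setT) (dotv b (y : 'rV[R]_n) ^+ 2)%:E)%E.
Proof.
move=> t0; rewrite -int_ab.
have mf : measurable_fun setT
    (fun p : V * V => (dotv (p.1 : 'rV[R]_n) a * dotv (p.2 : 'rV[R]_n) b)%:E).
  apply/measurable_EFinP; apply: measurable_funM; [exact: mfst_dot | exact: msnd_dot].
apply: (le_trans (lee_abs _)); apply: (le_trans (le_abse_integral _ _ mf)) => //.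
have t2 : 0 <= t / 2 by rewrite divr_ge0 // ltW.
have t2' : 0 <= (2 * t)^-1 by rewrite invr_ge0 mulr_ge0 // ltW.
rewrite -(int_fst _ (mdotsq a)); last by move=> y; exact: sqr_ge0.
rewrite -(int_snd _ (mdotsq b)); last by move=> y; exact: sqr_ge0.
rewrite -ge0_integralZl_EFin //; last 2 first.
- by move=> p _; rewrite lee_fin sqr_ge0.
- by apply/measurable_EFinP; exact: (measurableT_comp (mdotsq a)).
rewrite -ge0_integralZl_EFin //; last 2 first.
- by move=> p _; rewrite lee_fin sqr_ge0.
- by apply/measurable_EFinP; exact: (measurableT_comp (mdotsq b)).
rewrite -ge0_integralD //; last 4 first.
- by move=> p _; rewrite -EFinM lee_fin mulr_ge0 // sqr_ge0.
- apply: emeasurable_funM; first exact: measurable_cst.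
  by apply/measurable_EFinP; exact: (measurableT_comp (mdotsq a)).
- by move=> p _; rewrite -EFinM lee_fin mulr_ge0 // sqr_ge0.
- apply: emeasurable_funM; first exact: measurable_cst.
  by apply/measurable_EFinP; exact: (measurableT_comp (mdotsq b)).
apply: ge0_le_integral => //.
- apply: measurableT_comp => //.
- apply: emeasurable_funD; (apply: emeasurable_funM; first exact: measurable_cst).
  + by apply/measurable_EFinP; exact: (measurableT_comp (mdotsq a)).
  + by apply/measurable_EFinP; exact: (measurableT_comp (mdotsq b)).
move=> p _ /=; rewrite -!EFinM -EFinD lee_fin normrM.
rewrite (dotvC a) (dotvC b) -(real_normK (num_real (dotv p.1 a))) -(real_normK (num_real (dotv p.2 b))).
exact: amgm.
Qed.


Lemma int_c1 (f : 'rV[R]_n) (i : 'I_n) :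
  (\int[gamma]_(p in setT) ((p.1 : 'rV[R]_n) ord0 i * dotv (p.2 : 'rV[R]_n) f)%:E)%E
  = ((f *m Mx^T) ord0 i)%:E.
Proof.
under eq_integral => p _ do rewrite -(dotv_delta p.1 i).
by rewrite int_ab mulmx_coord trmxK dotvC.
Qed.

Lemma int_c3 (f : 'rV[R]_n) (i : 'I_n) :
  (\int[gamma]_(p in setT) (dotv (p.1 : 'rV[R]_n) f * (p.2 : 'rV[R]_n) ord0 i)%:E)%E
  = ((f *m Mx) ord0 i)%:E.
Proof.
under eq_integral => p _ do rewrite -(dotv_delta p.2 i).
by rewrite int_ab dotv_delta.
Qed.

Lemma int_d1 (B : 'M[R]_n) (i j : 'I_n) :
  (\int[gamma]_(p in setT) ((p.1 : 'rV[R]_n) ord0 i * ((p.2 : 'rV[R]_n) *m B) ord0 j)%:E)%E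
  = ((Mx *m B) i j)%:E.
Proof.
under eq_integral => p _ do rewrite -(dotv_delta p.1 i) mulmx_coord.
by rewrite int_ab -dotv_mulmx -mulmxA dotv_rowE.
Qed.

Lemma int_d2 (B : 'M[R]_n) (i j : 'I_n) :
  (\int[gamma]_(p in setT) (((p.1 : 'rV[R]_n) *m B) ord0 i * (p.2 : 'rV[R]_n) ord0 j)%:E)%E
  = ((B^T *m Mx) i j)%:E.
Proof.
under eq_integral => p _ do rewrite -(dotv_delta p.2 j) mulmx_coord.
by rewrite int_ab -mulmxA dotv_rowE.
Qed.

End INT.


Section PR.
Context {R : realType} {n : nat}.
Local Notation V := (vec R n).

Lemma int_push (P eta : probability V R) (h : V -> V) (g : V -> R) :
  measurable_fun setT h -> is_pushforward eta P h ->
  measurable_fun setT g -> (forall x, 0 <= g x) ->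
  (\int[eta]_(x in setT) (g x)%:E = \int[P]_(x in setT) (g (h x))%:E)%E.
Proof.
move=> mh ph mg g0.
rewrite (eq_measure_integral (pushforward P h)); last first.
  by move=> A mA _; rewrite /pushforward; exact: ph.
rewrite ge0_integral_pushforward //.
- exact/measurable_EFinP.
- by move=> y _; rewrite lee_fin.
Qed.

Lemma conc_push (P eta : probability V R) (U : 'M[R]_n) :
  is_pushforward eta P (fun x : V => ((x : 'rV[R]_n) *m proj_mx U (orthmx U) : V)) ->
  concentrated_on eta U.
Proof.
move=> ph; exists [set x : V | ((x : 'rV[R]_n) <= U)%MS]; first by split => //; exact: msub.
rewrite ph; last exact: msub.
rewrite (_ : _ @^-1` _ = setT) ?probability_setT //.
by apply/seteqP; split => x // _; exact: proj_mx_sub.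
Qed.

Lemma bessel_transfer (P : probability V R) (U : 'M[R]_n) (B : R) (x : 'rV[R]_n) :
  0 <= B -> bessel P U B ->
  (\int[P]_(y in setT) ((dotv x (y : 'rV[R]_n)) ^+ 2)%:E <= (B * sqnorm x)%:E)%E.
Proof.
move=> B0 [[cU _] bU].
set xP := x *m proj_mx U (orthmx U).
have xPU : (xP <= U)%MS by exact: proj_mx_sub.
have xPc : (x - xP <= orthmx U)%MS by exact: proj_compl (orth_full U).
have mf : forall z : 'rV[R]_n, measurable_fun setT (fun y : V => ((dotv z (y : 'rV[R]_n)) ^+ 2)%:E).
  move=> z; apply/measurable_EFinP; apply: measurable_funX.
  exact: (@mdotv2 R n _ V (fun=> z) id (measurable_cst _) (@measurable_id _ V setT)).
case: cU => A [mA AU] PA.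
rewrite (ae_eq_integral (fun y : V => ((dotv xP (y : 'rV[R]_n)) ^+ 2)%:E)) //; last first.
  apply: (@ae_eq_prob R _ _ P A _ _ mA PA) => y /AU yU /=.
  by rewrite -{1}(subrK xP x) dotvDl dotvC (dotv_orth yU xPc) add0r.
apply: (le_trans (bU _ xPU)); rewrite lee_fin ler_wpM2l //.
exact: proj_norm_le.
Qed.

End PR.


Definition mapW {R : realType} {n : nat} (B : 'M[R]_n) (p : vec R n * vec R n) :
  (vec R n * vec R n)%type := (p.1, ((p.2 : 'rV[R]_n) *m B : vec R n)).
Definition mapV {R : realType} {n : nat} (B : 'M[R]_n) (p : vec R n * vec R n) :
  (vec R n * vec R n)%type := (((p.1 : 'rV[R]_n) *m B : vec R n), p.2).

Lemma mapW_meas {R : realType} {n : nat} (B : 'M[R]_n) : measurable_fun setT (mapW B).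
Proof. by apply: measurable_fun_pair => //; exact: mmulmx. Qed.
Lemma mapV_meas {R : realType} {n : nat} (B : 'M[R]_n) : measurable_fun setT (mapV B).
Proof. by apply: measurable_fun_pair => //; exact: mmulmx. Qed.

HB.instance Definition _ {R : realType} {n : nat} (B : 'M[R]_n) :=
  isMeasurableFun.Build _ _ _ _ (mapW B) (mapW_meas B).
HB.instance Definition _ {R : realType} {n : nat} (B : 'M[R]_n) :=
  isMeasurableFun.Build _ _ _ _ (mapV B) (mapV_meas B).

Theorem lemma4p1 (R : realType) (n : nat) (W V : 'M[R]_n)
    (mu nu : probability (vec R n) R)
    (gamma : probability (vec R n * vec R n)%type R) (Bmu Bnu : R) :
  (* R^n = W (+) V^perp *)
  (W + orthmx V == (1%:M : 'M[R]_n))%MS -> (W :&: orthmx V == (0 : 'M[R]_n))%MS ->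
  0 < Bmu -> 0 < Bnu ->
  bessel mu W Bmu -> bessel nu V Bnu ->
  coupling gamma mu nu ->
  let c1 := forall f : 'rV[R]_n, (f <= W)%MS -> forall i : 'I_n,
      (f ord0 i)%:E =
      (\int[gamma]_(p in setT)
         ((p.1 : 'rV[R]_n) ord0 i * dotv (p.2 : 'rV[R]_n) f)%:E)%E in
  let c2 := forall (f : 'rV[R]_n) (i : 'I_n),
      ((f *m obl_proj W V) ord0 i)%:E =
      (\int[gamma]_(p in setT)
         ((p.1 : 'rV[R]_n) ord0 i * dotv (p.2 : 'rV[R]_n) f)%:E)%E in
  let c3 := forall (f : 'rV[R]_n) (i : 'I_n),
      ((f *m obl_proj V W) ord0 i)%:E =
      (\int[gamma]_(p in setT)
         (dotv (p.1 : 'rV[R]_n) f * (p.2 : 'rV[R]_n) ord0 i)%:E)%E in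
  let c4 := forall f g : 'rV[R]_n,
      (dotv (f *m obl_proj W V) g)%:E =
      (\int[gamma]_(p in setT)
         (dotv (p.1 : 'rV[R]_n) g * dotv (p.2 : 'rV[R]_n) f)%:E)%E in
  let c5 := forall f g : 'rV[R]_n,
      (dotv (f *m obl_proj V W) g)%:E =
      (\int[gamma]_(p in setT)
         (dotv (p.1 : 'rV[R]_n) f * dotv (p.2 : 'rV[R]_n) g)%:E)%E in
  [/\ c1 <-> c2, c1 <-> c3, c1 <-> c4 & c1 <-> c5] /\
  (c1 ->
    [/\ prob_frame mu W Bnu^-1 Bmu,
        prob_frame nu V Bmu^-1 Bnu,
        (forall eta : probability (vec R n) R,
           is_pushforward eta nu (fun x : vec R n => x *m orth_proj W) ->
           dual_frames mu eta W) &
        (forall eta : probability (vec R n) R,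
           is_pushforward eta mu (fun x : vec R n => x *m orth_proj V) ->
           dual_frames eta nu V)]).
Proof.
move=> hsum hcap Bmu0 Bnu0 bmu bnu cpl c1 c2 c3 c4 c5.
have full := fullE _ _ hsum; have cap := capEq0 _ _ hcap.
have full' := swap_full full cap; have cap' := swap_cap full cap.
have [[cmu m2mu] bmuB] := bmu; have [[cnu m2nu] bnuB] := bnu.
set M := @Mx R n gamma.
set P := obl_proj W V; set Q := obl_proj V W.
have adj : forall f g : 'rV[R]_n, dotv (f *m P) g = dotv f (g *m Q) by move=> f g; exact: proj_adj.
have F1 : forall a u : 'rV[R]_n, (u <= orthmx V)%MS -> dotv (a *m M) u = 0.
  by move=> a u uV; exact: (Mx_perp cpl m2mu m2nu V a u cnu uV).
have coordMT : forall (g : 'rV[R]_n) i, (g *m M^T) ord0 i = dotv (delta_mx 0 i *m M) g.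
  by move=> g i; rewrite mulmx_coord trmxK dotvC.
have E1 : c1 <-> (forall f : 'rV[R]_n, (f <= W)%MS -> f *m M^T = f).
  split => h f fW.
    by apply: rowP' => i; have := h f fW i; rewrite (int_c1 cpl m2mu m2nu) -/M => -[->].
  by move=> i; rewrite (int_c1 cpl m2mu m2nu) -/M h.
have E2 : c2 <-> (forall f : 'rV[R]_n, f *m P = f *m M^T).
  split => h f.
    by apply: rowP' => i; have := h f i; rewrite (int_c1 cpl m2mu m2nu) -/M => -[->].
  by move=> i; rewrite (int_c1 cpl m2mu m2nu) -/M h.
have E3 : c3 <-> (forall f : 'rV[R]_n, f *m Q = f *m M).
  split => h f.
    by apply: rowP' => i; have := h f i; rewrite (int_c3 cpl m2mu m2nu) -/M => -[->].
  by move=> i; rewrite (int_c3 cpl m2mu m2nu) -/M h.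
have E4 : c4 <-> (forall f g : 'rV[R]_n, dotv (f *m P) g = dotv (g *m M) f).
  split => h f g.
    by have := h f g; rewrite (int_ab cpl m2mu m2nu) -/M => -[].
  by rewrite (int_ab cpl m2mu m2nu) -/M h.
have E5 : c5 <-> (forall f g : 'rV[R]_n, dotv (f *m Q) g = dotv (f *m M) g).
  split => h f g.
    by have := h f g; rewrite (int_ab cpl m2mu m2nu) -/M => -[].
  by rewrite (int_ab cpl m2mu m2nu) -/M h.
have A12 : (forall f : 'rV[R]_n, (f <= W)%MS -> f *m M^T = f) <-> (forall f : 'rV[R]_n, f *m P = f *m M^T).
  split => h f.
    have fc : (f - f *m P <= orthmx V)%MS by exact: proj_compl.
    have z : (f - f *m P) *m M^T = 0.
      by apply/rowP => i; rewrite coordMT (F1 _ _ fc) mxE.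
    by rewrite -{2}(subrK (f *m P) f) mulmxDl z add0r h // proj_mx_sub.
  by move=> fW; rewrite -h proj_mx_id.
have A24 : (forall f : 'rV[R]_n, f *m P = f *m M^T) <-> (forall f g : 'rV[R]_n, dotv (f *m P) g = dotv (g *m M) f).
  split => h f.
    by move=> g; rewrite h [RHS]dotv_mulmx dotvC.
  by apply: vec_ext => g; rewrite h [LHS]dotv_mulmx dotvC.
have A45 : (forall f g : 'rV[R]_n, dotv (f *m P) g = dotv (g *m M) f) <->
           (forall f g : 'rV[R]_n, dotv (f *m Q) g = dotv (f *m M) g).
  split => h f g.
    by rewrite dotvC -adj h.
  by rewrite adj dotvC h.
have A53 : (forall f g : 'rV[R]_n, dotv (f *m Q) g = dotv (f *m M) g) <-> (forall f : 'rV[R]_n, f *m Q = f *m M).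
  split => h f.
    by apply: vec_ext => g; rewrite h.
  by move=> g; rewrite h.
split.
  split.
  - by split => [/E1/A12/E2 | /E2/A12/E1].
  - by split => [/E1/A12/A24/A45/A53/E3 | /E3/A53/A45/A24/A12/E1].
  - by split => [/E1/A12/A24/E4 | /E4/A24/A12/E1].
  - by split => [/E1/A12/A24/A45/E5 | /E5/A45/A24/A12/E1].
move=> /E1 hc1.
have hc2 := A12.1 hc1.
have hc3 := A53.1 (A45.1 (A24.1 hc2)).
have hM1 : forall x : 'rV[R]_n, (x <= W)%MS -> dotv (x *m M) x = sqnorm x.
  by move=> x xW; rewrite dotv_mulmx hc1.
have hM2 : forall x : 'rV[R]_n, (x <= V)%MS -> x *m M = x.
  by move=> x xV; rewrite -hc3 proj_mx_id.
have tnu : forall x : 'rV[R]_n,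
    (\int[nu]_(y in setT) (dotv x (y : 'rV[R]_n) ^+ 2)%:E <= (Bnu * sqnorm x)%:E)%E.
  by move=> x; exact: (bessel_transfer nu V Bnu x (ltW Bnu0) bnu).
have tmu : forall x : 'rV[R]_n,
    (\int[mu]_(y in setT) (dotv x (y : 'rV[R]_n) ^+ 2)%:E <= (Bmu * sqnorm x)%:E)%E.
  by move=> x; exact: (bessel_transfer mu W Bmu x (ltW Bmu0) bmu).
have ge0I : forall (P0 : probability (vec R n) R) (x : 'rV[R]_n),
    (0 <= \int[P0]_(y in setT) (dotv x (y : 'rV[R]_n) ^+ 2)%:E)%E.
  by move=> P0 x; apply: integral_ge0 => y _; rewrite lee_fin sqr_ge0.
have frame_mu : prob_frame mu W Bnu^-1 Bmu.
  split; first by rewrite invr_gt0.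
  split => // x xW.
  apply: (lb_arith _ _ _ _ Bnu0 _ _ (tnu x)).
  - by apply: integral_ge0 => y _; rewrite lee_fin sqr_ge0.
  - by apply: integral_ge0 => y _; rewrite lee_fin sqr_ge0.
  by rewrite -(hM1 x xW); exact: (amgm_int cpl m2mu m2nu x x Bnu Bnu0).
have frame_nu : prob_frame nu V Bmu^-1 Bnu.
  split; first by rewrite invr_gt0.
  split => // x xV.
  apply: (lb_arith2 _ _ _ _ Bmu0 _ _ (tmu x)).
  - by apply: integral_ge0 => y _; rewrite lee_fin sqr_ge0.
  - by apply: integral_ge0 => y _; rewrite lee_fin sqr_ge0.
  rewrite /sqnorm -{1}(hM2 x xV).
  by apply: (amgm_int cpl m2mu m2nu x x); rewrite invr_gt0.
have MQ : M = Q by apply: mx_ext => f; rewrite hc3.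
have mcoor1 : forall i : 'I_n, measurable_fun setT
    (fun p : vec R n * vec R n => (p.1 : 'rV[R]_n) ord0 i).
  by move=> i; exact: (measurableT_comp (mcoor i) measurable_fst).
have mcoor2 : forall i : 'I_n, measurable_fun setT
    (fun p : vec R n * vec R n => (p.2 : 'rV[R]_n) ord0 i).
  by move=> i; exact: (measurableT_comp (mcoor i) measurable_snd).
have mprod : forall i j : 'I_n, measurable_fun setT
    (fun p : vec R n * vec R n => ((p.1 : 'rV[R]_n) ord0 i * (p.2 : 'rV[R]_n) ord0 j)%:E).
  by move=> i j; apply/measurable_EFinP; apply: measurable_funM.
have mPr : forall (B : 'M[R]_n), measurable_fun setT
    (fun x : vec R n => ((x : 'rV[R]_n) *m B : vec R n)).
  by move=> B; apply: (mmulmx _ _ (fun x => x)); exact: measurable_id.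
have mpre : forall (B : 'M[R]_n) (A : set (vec R n)), measurable A ->
    measurable ((fun x : vec R n => ((x : 'rV[R]_n) *m B : vec R n)) @^-1` A).
  by move=> B A mA; rewrite -[X in measurable X]setTI; exact: mPr.
split => //.
- move=> eta peta.
  split; first by exists Bnu^-1, Bmu.
  split; first exact: (conc_push nu eta W peta).
  exists (distribution gamma (mapW (orth_proj W))).
  split.
    split => A mA.
      exact: (cpl.1 A mA).
    rewrite peta //; exact: (cpl.2 _ (mpre _ _ mA)).
  move=> i j.
  have fE : ((fun y : vec R n * vec R n => ((y.1 : 'rV[R]_n) ord0 i * (y.2 : 'rV[R]_n) ord0 j)%:E)
      \o mapW (orth_proj W)) = (fun p : vec R n * vec R n =>
        ((p.1 : 'rV[R]_n) ord0 i * ((p.2 : 'rV[R]_n) *m orth_proj W) ord0 j)%:E).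
    by apply/funext => p.
  rewrite integral_distribution //; last first.
    rewrite fE.
    have -> : (fun p : vec R n * vec R n =>
        ((p.1 : 'rV[R]_n) ord0 i * ((p.2 : 'rV[R]_n) *m orth_proj W) ord0 j)%:E) =
      (fun p : vec R n * vec R n => (dotv (p.1 : 'rV[R]_n) (delta_mx 0 i) *
         dotv (p.2 : 'rV[R]_n) (delta_mx 0 j *m (orth_proj W)^T))%:E).
      by apply/funext => p; rewrite dotv_delta mulmx_coord.
    exact: (integ_ab cpl m2mu m2nu).
  rewrite fE (int_d1 cpl m2mu m2nu) -/M MQ.
  have h1 : (1%:M - 1%:M *m Q <= orthmx W)%MS by exact: proj_compl full'.
  have := proj_mx_0 (orth_cap W) h1; rewrite mul1mx mulmxBl mul1mx.
  by move/eqP; rewrite subr_eq0 => /eqP <-.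
- move=> eta peta.
  have mPV := mPr (orth_proj V).
  have ieta : forall x : 'rV[R]_n, (x <= V)%MS ->
      (\int[eta]_(y in setT) (dotv x (y : 'rV[R]_n) ^+ 2)%:E =
       \int[mu]_(y in setT) (dotv x (y : 'rV[R]_n) ^+ 2)%:E)%E.
    move=> x xV.
    rewrite (int_push mu eta _ _ mPV peta); last 2 first.
    - exact: mdotsq.
    - by move=> y; exact: sqr_ge0.
    apply: eq_integral => y _; congr (_%:E); congr (_ ^+ 2).
    rewrite dotvC (proj_adj _ _ _ _ (orth_full V) (orth_cap V)).
    by rewrite (proj_mx_id (orth_cap V) xV) dotvC.
  split.
    exists Bnu^-1, Bmu; split; first by rewrite invr_gt0.
    split.
      split.
        split; first exact: (conc_push mu eta V peta).
        rewrite (int_push mu eta _ _ mPV peta); last 2 first.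
        - exact: msqn.
        - by move=> y; exact: dotv_ge0.
        apply: le_lt_trans m2mu; apply: ge0_le_integral => //.
        + by move=> y _; rewrite lee_fin dotv_ge0.
        + by apply/measurable_EFinP; exact: (measurableT_comp msqn).
        + by apply/measurable_EFinP; exact: msqn.
        by move=> y _; rewrite lee_fin; exact: proj_norm_le.
      by move=> x xV; rewrite ieta //; exact: tmu.
    move=> x xV; rewrite ieta //.
    apply: (lb_arith _ _ _ _ Bnu0 _ _ (tnu x)).
    - by apply: integral_ge0 => y _; rewrite lee_fin sqr_ge0.
    - by apply: integral_ge0 => y _; rewrite lee_fin sqr_ge0.
    by rewrite /sqnorm -{1}(hM2 x xV); exact: (amgm_int cpl m2mu m2nu x x Bnu Bnu0).
  split; first exact: cnu.
  exists (distribution gamma (mapV (orth_proj V))).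
  split.
    split => A mA.
      rewrite peta //; exact: (cpl.1 _ (mpre _ _ mA)).
    exact: (cpl.2 A mA).
  move=> i j.
  have fE : ((fun y : vec R n * vec R n => ((y.1 : 'rV[R]_n) ord0 i * (y.2 : 'rV[R]_n) ord0 j)%:E)
      \o mapV (orth_proj V)) = (fun p : vec R n * vec R n =>
        (((p.1 : 'rV[R]_n) *m orth_proj V) ord0 i * (p.2 : 'rV[R]_n) ord0 j)%:E).
    by apply/funext => p.
  rewrite integral_distribution //; last first.
    rewrite fE.
    have -> : (fun p : vec R n * vec R n =>
        (((p.1 : 'rV[R]_n) *m orth_proj V) ord0 i * (p.2 : 'rV[R]_n) ord0 j)%:E) =
      (fun p : vec R n * vec R n => (dotv (p.1 : 'rV[R]_n) (delta_mx 0 i *m (orth_proj V)^T) *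
         dotv (p.2 : 'rV[R]_n) (delta_mx 0 j))%:E).
      by apply/funext => p; rewrite dotv_delta mulmx_coord.
    exact: (integ_ab cpl m2mu m2nu).
  rewrite fE (int_d2 cpl m2mu m2nu) -/M MQ.
  have -> : (orth_proj V)^T = orth_proj V.
    by apply: adj_tr => f g; exact: (proj_adj _ _ _ _ (orth_full V) (orth_cap V)).
  have PVV : (orth_proj V <= V)%MS.
    by have := proj_mx_sub V (orthmx V) 1%:M; rewrite mul1mx.
  by rewrite (proj_mx_id cap' PVV).
Qed.
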